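(* Let $\mathcal A,\mathcal B$ be unital $C^*$-algebras with faithful traces $\tau,\omega$, respectively, let $J:\mathcal A\to\mathcal B$ be a Jordan *-isomorphism and $C\in\mathcal B_+^{-1}$ such that $\omega(CJ(X))=\tau(X)$ for all $X\in\mathcal A$. Then $C$ is a central element of $\mathcal B$.
   Context: $\mathcal B_+^{-1}$ is the set of positive invertible elements. A trace is a positive linear functional with $\tau(AB)=\tau(BA)$; faithful means $\tau(A)=0$, $A\ge0$ implies $A=0$. A Jordan *-isomorphism is a linear bijection $J$ with $J(XY+YX)=J(X)J(Y)+J(Y)J(X)$ and $J(X^* )=J(X)^*$. *)

(* Defs.v *)
From mathcomp Require Import all_boot all_order all_algebra.
From mathcomp Require Import reals.
From mathcomp Require Import complex.
Set Implicit Arguments. Unset Strict Implicit. Unset Printing Implicit Defensive.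
Import Order.TTheory GRing.Theory Num.Theory.
Local Open Scope ring_scope.

Section CStar.
Variable R : realType.

Definition is_cstar_algebra (A : algType R[i]) (star : A -> A) (nrm : A -> R) : Prop :=
  (
      (forall x y : A, star (x + y) = star x + star y) /\
      (forall (a : R[i]) (x : A), star (a *: x) = conjc a *: star x) /\
      (forall x y : A, star (x * y) = star y * star x) /\
      (forall x : A, star (star x) = x) /\
   (
      (forall x : A, 0 <= nrm x) /\
      (forall x : A, nrm x = 0 -> x = 0) /\
      (forall x y : A, nrm (x + y) <= nrm x + nrm y) /\
      (forall (a : R[i]) (x : A), ((nrm (a *: x))%:C)%C = `|a| * ((nrm x)%:C)%C) /\
      (forall x y : A, nrm (x * y) <= nrm x * nrm y) /\
      (forall x : A, nrm (star x * x) = nrm x ^+ 2) /\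
      (forall u : nat -> A,
         (forall e : R, 0 < e -> exists N : nat, forall m n : nat,
              (N <= m)%N -> (N <= n)%N -> nrm (u m - u n) < e) ->
         exists l : A, forall e : R, 0 < e -> exists N : nat, forall n : nat,
              (N <= n)%N -> nrm (u n - l) < e))).

Definition invertible (A : algType R[i]) (x : A) : Prop :=
  exists y : A, x * y = 1 /\ y * x = 1.

Definition in_spectrum (A : algType R[i]) (x : A) (l : R[i]) : Prop :=
  ~ invertible (x - l *: 1).

Definition positive (A : algType R[i]) (star : A -> A) (x : A) : Prop :=
  star x = x /\ forall l : R[i], in_spectrum x l -> 0 <= l.

Definition faithful_trace (A : algType R[i]) (star : A -> A) (tau : A -> R[i]) : Prop :=
  [/\ (forall (a : R[i]) (x y : A), tau (a *: x + y) = a * tau x + tau y),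
      (forall x : A, positive star x -> 0 <= tau x),
      (forall x y : A, tau (x * y) = tau (y * x)) &
      (forall x : A, positive star x -> tau x = 0 -> x = 0)].

Definition jordan_star_iso (A B : algType R[i]) (starA : A -> A) (starB : B -> B)
    (J : A -> B) : Prop :=
  [/\ (forall (a : R[i]) (x y : A), J (a *: x + y) = a *: J x + J y),
      bijective J,
      (forall x y : A, J (x * y + y * x) = J x * J y + J y * J x) &
      (forall x : A, J (starA x) = starB (J x))].

End CStar.

(* Main.v *)
Require Import Defs.
From mathcomp Require Import all_boot all_order all_algebra.
From mathcomp Require Import reals.
From mathcomp Require Import complex.
From mathcomp Require Import ring lra.
Import Order.TTheory GRing.Theory Num.Theory.
Set Implicit Arguments. Unset Strict Implicit. Unset Printing Implicit Defensive.
Local Open Scope ring_scope.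
Notation cRe := mathcomp.real_closed.complex.Re.
Notation cIm := mathcomp.real_closed.complex.Im.

Definition nc (R : realType) (z : R[i]) : R := Num.sqrt (cRe z ^+ 2 + cIm z ^+ 2).

Lemma nc_ge0 (R : realType) (z : R[i]) : 0 <= nc z.
Proof. exact: sqrtr_ge0. Qed.

Lemma nc_sqr (R : realType) (z : R[i]) : nc z ^+ 2 = cRe z ^+ 2 + cIm z ^+ 2.
Proof. by rewrite sqr_sqrtr // addr_ge0 ?sqr_ge0. Qed.

Lemma normC_nc (R : realType) (z : R[i]) : `|z| = (nc z)%:C%C.
Proof. by rewrite normc_def. Qed.

Lemma realCM (R : realType) (a b : R) : (a * b)%:C%C = (a%:C * b%:C)%C :> R[i].
Proof. by rewrite rmorphM. Qed.

Lemma nrmZ (R : realType) (B : algType R[i]) (star : B -> B) (nrm : B -> R)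
  (H : is_cstar_algebra star nrm) (a : R[i]) (x : B) : nrm (a *: x) = nc a * nrm x.
Proof.
case: H => _ [_ [_ [_ [_ [_ [_ [HZ _]]]]]]].
apply: complexI. by rewrite realCM -normC_nc HZ.
Qed.

Lemma conj_i (R : realType) : conjc ('i%C : R[i]) = - 'i%C.
Proof. by apply/eqP; rewrite eq_complex /= oppr0 !eqxx. Qed.

Lemma nc_i (R : realType) : nc ('i%C : R[i]) = 1.
Proof. by rewrite /nc /= expr0n /= expr1n add0r sqrtr1. Qed.

Lemma nc_N1 (R : realType) : nc (-1 : R[i]) = 1.
Proof. by rewrite /nc /= oppr0 expr0n /= sqrrN expr1n addr0 sqrtr1. Qed.

Lemma nc_real (R : realType) (t : R) : 0 <= t -> nc (t%:C%C) = t.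
Proof. by move=> t0; rewrite /nc /= expr0n /= addr0 sqrtr_sqr ger0_norm. Qed.

Lemma nc0 (R : realType) : nc (0 : R[i]) = 0.
Proof. by rewrite /nc /= expr0n /= addr0 sqrtr0. Qed.


Section S.
Variables (R : realType) (B : algType R[i]) (star : B -> B) (nrm : B -> R).
Hypothesis H : is_cstar_algebra star nrm.

Lemma starD x y : star (x + y) = star x + star y.
Proof. by case: H. Qed.
Lemma starZ a x : star (a *: x) = conjc a *: star x.
Proof. case: H => _ [HH _]; exact: HH. Qed.
Lemma starM x y : star (x * y) = star y * star x.
Proof. case: H => _ [_ [HH _]]; exact: HH. Qed.
Lemma starK x : star (star x) = x.
Proof. case: H => _ [_ [_ [HH _]]]; exact: HH. Qed.
Lemma nrm_ge0 x : 0 <= nrm x.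
Proof. case: H => _ [_ [_ [_ [HH _]]]]; exact: HH. Qed.
Lemma nrm_eq0 x : nrm x = 0 -> x = 0.
Proof. case: H => _ [_ [_ [_ [_ [HH _]]]]]; exact: HH. Qed.
Lemma nrmD x y : nrm (x + y) <= nrm x + nrm y.
Proof. case: H => _ [_ [_ [_ [_ [_ [HH _]]]]]]; exact: HH. Qed.
Lemma nrmM x y : nrm (x * y) <= nrm x * nrm y.
Proof. case: H => _ [_ [_ [_ [_ [_ [_ [_ [HH _]]]]]]]]; exact: HH. Qed.
Lemma nrmC x : nrm (star x * x) = nrm x ^+ 2.
Proof. case: H => _ [_ [_ [_ [_ [_ [_ [_ [_ [HH _]]]]]]]]]; exact: HH. Qed.
Lemma nrm_complete (u : nat -> B) :
  (forall e : R, 0 < e -> exists N : nat, forall m n : nat,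
              (N <= m)%N -> (N <= n)%N -> nrm (u m - u n) < e) ->
  exists l : B, forall e : R, 0 < e -> exists N : nat, forall n : nat,
              (N <= n)%N -> nrm (u n - l) < e.
Proof. case: H => _ [_ [_ [_ [_ [_ [_ [_ [_ [_ HH]]]]]]]]]; exact: HH. Qed.
Lemma nrmZ' a x : nrm (a *: x) = nc a * nrm x.
Proof. Check (nrmZ H). exact: (nrmZ H a x). Qed.

Lemma nrm0 : nrm 0 = 0.
Proof. by rewrite -(scale0r 0) nrmZ' nc0 mul0r. Qed.
Lemma nrmN x : nrm (- x) = nrm x.
Proof. by rewrite -scaleN1r nrmZ' nc_N1 mul1r. Qed.
Lemma nrmBC x y : nrm (x - y) = nrm (y - x).
Proof. by rewrite -nrmN opprB. Qed.

Lemma star1 : star 1 = 1.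
Proof.
have h : forall y, star 1 * y = y.
  move=> y; by rewrite -{1}(starK y) -starM mulr1 starK.
by rewrite -[RHS]h mulr1.
Qed.

Lemma starN x : star (- x) = - star x.
Proof.
by rewrite -scaleN1r starZ rmorphN1 scaleN1r.
Qed.

Lemma star_sub x y : star (x - y) = star x - star y.
Proof. by rewrite starD starN. Qed.

Lemma nrm1 : nrm 1 = 1.
Proof.
have e : nrm 1 = nrm 1 ^+ 2 by rewrite -nrmC star1 mulr1.
have : nrm 1 != 0.
  apply/eqP => /nrm_eq0 /eqP; by rewrite oner_eq0.
move: e; rewrite expr2 => e n0.
by apply: (mulfI n0); rewrite mulr1 -e.
Qed.

End S.


Lemma bernoulli (R : realType) (d : R) (n : nat) : 0 <= d -> 1 + n%:R * d <= (1 + d) ^+ n.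
Proof.
move=> d0; elim: n => [|n IH]; first by rewrite expr0 mul0r addr0.
rewrite exprS -nat1r.
have h : 0 <= n%:R * d * d by rewrite mulr_ge0 // mulr_ge0.
have h2 : 0 <= 1 + d by lra.
have := ler_wpM2l h2 IH. nra.
Qed.

Lemma geom_small (R : realType) (q e : R) : 0 <= q -> q < 1 -> 0 < e ->
  exists N : nat, q ^+ N < e.
Proof.
move=> q0 q1 e0.
have [->|qn0] := eqVneq q 0; first by exists 1%N; rewrite expr1.
have qp : 0 < q by rewrite lt_def qn0.
set d := q^-1 - 1.
have dp : 0 < d.
  by rewrite /d subr_gt0 invf_gt1.
exists (Num.bound ((e * d)^-1)).
set N := Num.bound _.
have hb : (e * d)^-1 < N%:R by apply: archi_boundP; rewrite invr_ge0 mulr_ge0 // ltW.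
have hB := bernoulli N (ltW dp).
have e1 : 1 + d = q^-1 by rewrite /d; lra.
rewrite e1 in hB.
have : e^-1 < q^-1 ^+ N.
  apply: (lt_le_trans _ hB).
  have : e^-1 = (e * d)^-1 * d by rewrite invfM mulrAC -mulrA divff ?mulr1 // gt_eqF.
  move=> ->; have := ltr_pM2r dp; move=> h.
  have : (e * d)^-1 * d < N%:R * d by rewrite h.
  lra.
rewrite exprVn.
move=> h; rewrite -(invrK e) -(invrK (q ^+ N)).
rewrite ltf_pV2 ?posrE ?invr_gt0 ?exprn_gt0 //.
Qed.


Lemma zid (V : zmodType) (a b c : V) : a - c = - ((c - b) - a) - b.
Proof. rewrite opprB. rewrite -addrA. rewrite -opprD. rewrite subrK. done. Qed.

Section N.
Variables (R : realType) (B : algType R[i]) (star : B -> B) (nrm : B -> R).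
Hypothesis H : is_cstar_algebra star nrm.

Lemma nrmX y k : nrm (y ^+ k) <= nrm y ^+ k.
Proof.
elim: k => [|k IH]; first by rewrite !expr0 (nrm1 H).
rewrite !exprS; apply: le_trans (nrmM H _ _) _.
by apply: ler_wpM2l; [exact: nrm_ge0 H _ | exact: IH].
Qed.

Lemma nrm_sum n (f : nat -> B) : nrm (\sum_(k < n) f k) <= \sum_(k < n) nrm (f k).
Proof.
elim: n => [|n IH]; first by rewrite !big_ord0 (nrm0 H).
rewrite !big_ord_recr /=; apply: le_trans (nrmD H _ _) _.
by apply: lerD.
Qed.

Definition ps (y : B) n := \sum_(k < n) y ^+ k.

Lemma psS y n : ps y n.+1 = ps y n + y ^+ n.
Proof. by rewrite /ps big_ord_recr. Qed.

Lemma ps_add y n j : ps y (n + j) = ps y n + y ^+ n * ps y j.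
Proof.
elim: j => [|j IH]; first by rewrite addn0 /ps big_ord0 mulr0 addr0.
by rewrite addnS !psS IH mulrDr -exprD addrA.
Qed.

Lemma ps_telL y n : (1 - y) * ps y n = 1 - y ^+ n.
Proof.
elim: n => [|n IH]; first by rewrite /ps big_ord0 mulr0 expr0 subrr.
rewrite psS mulrDr IH exprS mulrBl mul1r; by rewrite addrA subrK.
Qed.

Lemma ps_telR y n : ps y n * (1 - y) = 1 - y ^+ n.
Proof.
elim: n => [|n IH]; first by rewrite /ps big_ord0 mul0r expr0 subrr.
rewrite psS mulrDl IH exprSr mulrBr mulr1; by rewrite addrA subrK.
Qed.

Lemma geom_sum (q : R) n : 0 <= q -> q < 1 -> \sum_(k < n) q ^+ k <= (1 - q)^-1.
Proof.
move=> q0 q1.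
have h : (1 - q) * \sum_(k < n) q ^+ k = 1 - q ^+ n.
  elim: n => [|n IH]; first by rewrite big_ord0 mulr0 expr0 subrr.
  rewrite big_ord_recr /= mulrDr IH exprS; ring.
have qp : 0 < 1 - q by lra.
rewrite -(ler_pM2l qp) h mulfV ?gt_eqF //.
have := exprn_ge0 n q0. lra.
Qed.

Lemma ps_tail y n j : nrm y < 1 ->
  nrm (ps y (n + j) - ps y n) <= nrm y ^+ n * (1 - nrm y)^-1.
Proof.
move=> y1; rewrite ps_add addrC addKr.
apply: le_trans (nrmM H _ _) _.
apply: ler_pM; [exact: (nrm_ge0 H)|exact: (nrm_ge0 H)|exact: nrmX|].
apply: le_trans (nrm_sum _ _) _.
apply: le_trans (geom_sum j (nrm_ge0 H y) y1).
by apply: ler_sum => k _; apply: nrmX.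
Qed.

Lemma small_zero (r : R) : 0 <= r -> (forall e, 0 < e -> r < e) -> r = 0.
Proof.
move=> r0 h; apply/eqP; rewrite eq_le r0 andbT; rewrite leNgt; apply/negP => rp.
by have := h r rp; rewrite ltxx.
Qed.

Lemma neumann y : nrm y < 1 -> invertible (1 - y).
Proof.
move=> y1; set q := nrm y.
have q0 : 0 <= q := nrm_ge0 H y.
have qp : 0 < 1 - q by rewrite subr_gt0.
have tail : forall n m, (n <= m)%N -> nrm (ps y m - ps y n) <= q ^+ n * (1 - q)^-1.
  by move=> n m /subnKC <-; apply: ps_tail.
have qmono : forall n m, (n <= m)%N -> q ^+ m <= q ^+ n.
  by move=> n m nm; exact: (ler_wiXn2l q0 (ltW y1) nm).
have [l hl] : exists l, forall e : R, 0 < e -> exists N : nat, forall n : nat,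
              (N <= n)%N -> nrm (ps y n - l) < e.
  apply: (nrm_complete H) => e e0.
  have [N hN] := geom_small q0 y1 (mulr_gt0 e0 qp).
  have hN' : q ^+ N * (1 - q)^-1 < e by rewrite ltr_pdivrMr.
  exists N => m n Nm Nn.
  wlog nm : m n Nm Nn / (n <= m)%N.
    move=> W; case: (leqP n m) => [nm|mn]; first exact: W.
    by rewrite (nrmBC H); apply: W => //; apply: ltnW.
  apply: le_lt_trans (tail _ _ nm) _; apply: le_lt_trans hN'.
  by apply: ler_wpM2r; [rewrite invr_ge0 ltW|apply: qmono].
have lim_small : forall e : R, 0 < e -> exists n, nrm (ps y n - l) < e /\ q ^+ n < e.
  move=> e e0; have [N1 h1] := hl e e0; have [N2 h2] := geom_small q0 y1 e0.
  exists (maxn N1 N2); split; first by apply: h1; rewrite leq_maxl.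
  by apply: le_lt_trans h2; apply: qmono; rewrite leq_maxr.
exists l; split; apply: subr0_eq; apply: (nrm_eq0 H); (apply: small_zero; [exact: (nrm_ge0 H)|]).
- move=> e e0.
  set c := nrm (1 - y) + 1.
  have c0 : 0 < c by rewrite /c; have := nrm_ge0 H (1 - y); lra.
  have [n [hn1 hn2]] := lim_small (e / 2 / c) (divr_gt0 (divr_gt0 e0 (ltr0Sn _ 1)) c0).
  have eq : (1 - y) * l - 1 = - ((1 - y) * (ps y n - l)) - y ^+ n.
    by rewrite mulrBr ps_telL; apply: zid.
  rewrite eq; apply: le_lt_trans (nrmD H _ _) _; rewrite (nrmN H) (nrmN H).
  have h1 : nrm ((1 - y) * (ps y n - l)) <= nrm (1 - y) * nrm (ps y n - l) by exact: (nrmM H).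
  have h2 := nrmX y n.
  have h3 : nrm (1 - y) * nrm (ps y n - l) <= c * (e / 2 / c).
    apply: ler_pM; [exact: (nrm_ge0 H)|exact: (nrm_ge0 H)| rewrite /c; lra| exact: ltW].
  have h4 : c * (e / 2 / c) = e / 2 by rewrite mulrC mulfVK ?gt_eqF.
  have h5 : e / 2 / c <= e / 2.
    rewrite ler_pdivrMr //; rewrite ler_peMr //; [|rewrite /c; have := nrm_ge0 H (1 - y); lra].
    by rewrite divr_ge0 // ltW.
  lra.
- move=> e e0.
  set c := nrm (1 - y) + 1.
  have c0 : 0 < c by rewrite /c; have := nrm_ge0 H (1 - y); lra.
  have [n [hn1 hn2]] := lim_small (e / 2 / c) (divr_gt0 (divr_gt0 e0 (ltr0Sn _ 1)) c0).
  have eq : l * (1 - y) - 1 = - ((ps y n - l) * (1 - y)) - y ^+ n.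
    by rewrite mulrBl ps_telR; apply: zid.
  rewrite eq; apply: le_lt_trans (nrmD H _ _) _; rewrite (nrmN H) (nrmN H).
  have h1 : nrm ((ps y n - l) * (1 - y)) <= nrm (ps y n - l) * nrm (1 - y) by exact: (nrmM H).
  have h2 := nrmX y n.
  have h3 : nrm (ps y n - l) * nrm (1 - y) <= (e / 2 / c) * c.
    apply: ler_pM; [exact: (nrm_ge0 H)|exact: (nrm_ge0 H)| exact: ltW | rewrite /c; lra].
  have h4 : (e / 2 / c) * c = e / 2 by rewrite mulfVK ?gt_eqF.
  have h5 : e / 2 / c <= e / 2.
    rewrite ler_pdivrMr //; rewrite ler_peMr //; [|rewrite /c; have := nrm_ge0 H (1 - y); lra].
    by rewrite divr_ge0 // ltW.
  lra.
Qed.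
End N.


Lemma ncM (R : realType) (a b : R[i]) : nc (a * b) = nc a * nc b.
Proof. apply: complexI; by rewrite realCM -!normC_nc normrM. Qed.

Lemma nc1 (R : realType) : nc (1 : R[i]) = 1.
Proof. by rewrite /nc /= expr0n /= expr1n addr0 sqrtr1. Qed.

Lemma nc_eq0 (R : realType) (a : R[i]) : nc a = 0 -> a = 0.
Proof. move=> h; apply/eqP; rewrite -normr_eq0 normC_nc h. by []. Qed.

Lemma inv_mul (R : realType) (B : algType R[i]) (u v : B) :
  invertible u -> invertible v -> invertible (u * v).
Proof.
move=> [u' [h1 h2]] [v' [h3 h4]]; exists (v' * u'); split.
- by rewrite mulrA -(mulrA u) h3 mulr1 h1.
- by rewrite mulrA -(mulrA v') h2 mulr1 h4.
Qed.

Lemma inv_scale (R : realType) (B : algType R[i]) (a : R[i]) (u : B) :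
  a != 0 -> invertible u -> invertible (a *: u).
Proof.
move=> a0 [w [h1 h2]]; exists (a^-1 *: w); split.
- by rewrite -scalerAl -scalerAr h1 scalerA mulfV // scale1r.
- by rewrite -scalerAl -scalerAr h2 scalerA mulVf // scale1r.
Qed.

Section NB.
Variables (R : realType) (B : algType R[i]) (star : B -> B) (nrm : B -> R).
Hypothesis H : is_cstar_algebra star nrm.

Lemma neumann_bound (x : B) (l : R[i]) : nrm x < nc l -> invertible (x - l *: 1).
Proof.
move=> hx.
have l0 : l != 0.
  apply/eqP => e; move: hx; rewrite e nc0 => hx.
  by have := nrm_ge0 H x; rewrite leNgt hx.
have hinv : nc l^-1 * nc l = 1 by rewrite -ncM mulVf // nc1.
have hpos : 0 < nc l^-1.
  rewrite lt_def nc_ge0 andbT; apply/eqP => e; move: hinv; rewrite e mul0r => /eqP.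
  by rewrite eq_sym oner_eq0.
have y1 : nrm (l^-1 *: x) < 1 by rewrite (nrmZ' H) -hinv ltr_pM2l.
have := neumann H y1 => hi.
have e : x - l *: 1 = (- l) *: (1 - l^-1 *: x).
  by rewrite scalerBr scalerA mulNr mulfV // scaleN1r opprK scaleNr addrC.
rewrite e; apply: inv_scale => //; by rewrite oppr_eq0.
Qed.

End NB.


Section SA.
Variables (R : realType) (B : algType R[i]) (star : B -> B) (nrm : B -> R).
Hypothesis H : is_cstar_algebra star nrm.

Lemma nc2_shift (m : R[i]) (t : R) :
  nc (m + t%:C%C * 'i%C) ^+ 2 = cRe m ^+ 2 + (cIm m + t) ^+ 2.
Proof. rewrite nc_sqr; case: m => a b; simpc. by []. Qed.

Lemma sa_inv (K : B) (m : R[i]) : star K = K -> cIm m != 0 -> invertible (K - m *: 1).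
Proof.
move=> sK b0.
set P := nrm (K * K).
set b := cIm m.
set t := (P + 1) / (2 * b).
set s : R[i] := t%:C%C * 'i%C.
set x := K + s *: 1.
have ex : x - (m + s) *: 1 = K - m *: 1.
  by rewrite /x scalerDl opprD addrACA subrr addr0.
rewrite -ex; apply: (neumann_bound H).
have hs : conjc s = - s by rewrite /s /real_complex_def /=; simpc.
have hss : s * s = - (t ^+ 2)%:C%C.
  by rewrite /s /real_complex_def /=; simpc; rewrite expr2.
have hx : star x * x = K * K + (t ^+ 2)%:C%C *: 1.
  rewrite /x (starD H) (starZ H) (star1 H) sK hs.
  rewrite mulrDr !mulrDl -!scalerAl -!scalerAr !mul1r !mulr1 scalerA.
  by rewrite mulNr hss opprK scaleNr -addrA addKr.
have hb : nrm x ^+ 2 <= P + t ^+ 2.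
  rewrite -(nrmC H) hx; apply: le_trans (nrmD H _ _) _.
  by rewrite (nrmZ' H) nc_real ?sqr_ge0 // (nrm1 H) mulr1.
have hn := nc2_shift m t.
have key : 2 * b * t = P + 1.
  rewrite /t mulrC -mulrA mulVf ?mulr1 //.
  by rewrite mulf_neq0 // pnatr_eq0.
have h0 := nrm_ge0 H x.
have h1 := nc_ge0 (m + s).
have hlt : nrm x ^+ 2 < nc (m + s) ^+ 2.
  rewrite /s hn. have := sqr_ge0 (cRe m). rewrite -/b. nra.
rewrite -(ltr_pXn2r (n := 2)) //.
Qed.

End SA.


Lemma ImN (R : realType) (m : R[i]) : cIm (- m) = - cIm m.
Proof. by case: m => a b; simpc. Qed.

Section PS.
Variables (R : realType) (B : algType R[i]) (star : B -> B) (nrm : B -> R).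
Hypothesis H : is_cstar_algebra star nrm.

Lemma pos_sq (K : B) : star K = K -> positive star (K * K).
Proof.
move=> sK; split; first by rewrite (starM H) sK.
move=> l nl.
set m := sqrtc l.
have hl : l = m ^+ 2 by rewrite /m sqr_sqrtc.
have [im0|imn0] := eqVneq (cIm m) 0.
  have em : m = (cRe m)%:C%C by move: im0; case: (m) => a b /= ->.
  by rewrite hl em -rmorphXn /= ler0c sqr_ge0.
exfalso; apply: nl.
have e : K * K - l *: 1 = (K - m *: 1) * (K - (- m) *: 1).
  rewrite hl mulrBl !mulrBr -!scalerAl -!scalerAr !mul1r !mulr1 scalerA.
  rewrite !scaleNr opprK mulrN expr2 scaleNr.
  by rewrite opprK opprD addrA addrK.
rewrite e; apply: inv_mul; apply: (sa_inv H) => //.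
by rewrite ImN oppr_eq0.
Qed.
End PS.


Lemma cancel2 (R : realType) (V : lmodType R[i]) (u v : V) : u + u = v + v -> u = v.
Proof.
move=> e.
have h2 : (1 + 1 : R[i]) != 0 by rewrite -mulr2n pnatr_eq0.
have k : forall w : V, w = (1 + 1 : R[i])^-1 *: (w + w).
  by move=> w; rewrite -{2 3}[w]scale1r -scalerDl scalerA mulVf // scale1r.
by rewrite (k u) e -k.
Qed.

Lemma cancel2c (R : realType) (u v : R[i]) : u + u = v + v -> u = v.
Proof.
move=> e; have h2 : (2 : R[i]) != 0 by rewrite pnatr_eq0.
apply: (mulfI h2); by rewrite !mulr_natl !mulr2n.
Qed.

Lemma i_sq (R : realType) : ('i%C * 'i%C : R[i]) = -1.
Proof. by rewrite -expr2 sqr_i. Qed.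

Lemma zid2 (V : zmodType) (p q r : V) : p + p = (p + q) + (r + p) - (r + q).
Proof. by rewrite [r + p]addrC addrACA [q + r]addrC addrK. Qed.

Section Lin.
Variables (R : realType) (A B : algType R[i]) (sA : A -> A) (sB : B -> B) (J : A -> B).
Hypothesis HJ : jordan_star_iso sA sB J.

Lemma J0 : J 0 = 0.
Proof.
case: HJ => lin _ _ _.
have := lin 1 0 0; rewrite !scale1r addr0 => e.
have : J 0 + 0 = J 0 + J 0 by rewrite addr0 {1}e.
by move/addrI => <-.
Qed.

Lemma JD x y : J (x + y) = J x + J y.
Proof. by case: HJ => lin _ _ _; have := lin 1 x y; rewrite !scale1r. Qed.
Lemma JZ a x : J (a *: x) = a *: J x.
Proof. by case: HJ => lin _ _ _; have := lin a x 0; rewrite J0 !addr0. Qed.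
Lemma JN x : J (- x) = - J x.
Proof. by rewrite -scaleN1r JZ scaleN1r. Qed.
Lemma JB x y : J (x - y) = J x - J y.
Proof. by rewrite JD JN. Qed.
Lemma JJ x y : J (x * y + y * x) = J x * J y + J y * J x.
Proof. case: HJ => _ _ h _; exact: h. Qed.
Lemma Jsq x : J (x * x) = J x * J x.
Proof. apply: cancel2; by rewrite -JD JJ. Qed.
Lemma Jaba a b : J (a * b * a) = J a * J b * J a.
Proof.
apply: cancel2.
have e : a * b * a + a * b * a = (a * b + b * a) * a + a * (a * b + b * a) - (a * a * b + b * (a * a)).
  by rewrite mulrDl mulrDr !mulrA; apply: zid2.
rewrite -JD e JB !JJ Jsq !mulrDl !mulrDr !mulrA; apply/esym; apply: zid2.
Qed.
End Lin.

Section Tr.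
Variables (R : realType) (T : algType R[i]) (st : T -> T) (tr : T -> R[i]).
Hypothesis Ht : faithful_trace st tr.

Lemma tr0 : tr 0 = 0.
Proof.
case: Ht => lin _ _ _.
have := lin 1 0 0; rewrite mul1r scale1r addr0 => e.
have : tr 0 + 0 = tr 0 + tr 0 by rewrite addr0 {1}e.
by move/addrI => <-.
Qed.
Lemma trD x y : tr (x + y) = tr x + tr y.
Proof. by case: Ht => lin _ _ _; have := lin 1 x y; rewrite scale1r mul1r. Qed.
Lemma trZ a x : tr (a *: x) = a * tr x.
Proof. by case: Ht => lin _ _ _; have := lin a x 0; rewrite tr0 !addr0. Qed.
Lemma trN x : tr (- x) = - tr x.
Proof. by rewrite -scaleN1r trZ mulN1r. Qed.
Lemma trB x y : tr (x - y) = tr x - tr y.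
Proof. by rewrite trD trN. Qed.
Lemma trC x y : tr (x * y) = tr (y * x).
Proof. case: Ht => _ _ h _; exact: h. Qed.
Lemma trF x : positive st x -> tr x = 0 -> x = 0.
Proof. case: Ht => _ _ _ h; exact: h. Qed.
End Tr.



Unset Implicit Arguments.

Theorem lemma18 (R : realType)
  (A : algType R[i]) (starA : A -> A) (nrmA : A -> R)
  (B : algType R[i]) (starB : B -> B) (nrmB : B -> R)
  (HA : is_cstar_algebra starA nrmA) (HB : is_cstar_algebra starB nrmB)
  (tau : A -> R[i]) (omega : B -> R[i])
  (Htau : faithful_trace starA tau) (Homega : faithful_trace starB omega)
  (J : A -> B) (HJ : jordan_star_iso starA starB J)
  (C : B) (HCpos : positive starB C) (HCinv : invertible C)
  (HC : forall X : A, omega (C * J X) = tau X) :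
  forall Y : B, C * Y = Y * C.
Proof.
have [g Jg gJ] : bijective J by case: HJ.
have sC : starB C = C by case: HCpos.
have step1 : forall Y, omega ((Y * C - C * Y) * (Y * C - C * Y)) = 0.
  move=> Y.
  set a := g Y; set b := g C.
  have Ja : J a = Y by rewrite /a gJ.
  have Jb : J b = C by rewrite /b gJ.
  have e1 : omega (C * (Y * C * Y)) = tau (a * b * a).
    by rewrite -HC (Jaba HJ) Ja Jb.
  have e2 : omega (C * (Y * Y * C + C * (Y * Y))) = tau (a * a * b + b * (a * a)).
    by rewrite -HC (JJ HJ) (Jsq HJ) Ja Jb.
  have e3 : tau (a * a * b + b * (a * a)) = tau (a * b * a) + tau (a * b * a).
    rewrite (trD Htau) [tau (b * _)](trC Htau) -mulrA (trC Htau) -mulrA; by [].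
  set w1 := omega (C * C * Y * Y).
  set w2 := omega (C * Y * C * Y).
  have f1 : omega (C * (Y * Y * C)) = w1.
    by rewrite mulrA (trC Homega) !mulrA.
  have f2 : omega (C * (C * (Y * Y))) = w1 by rewrite !mulrA.
  have f3 : omega (C * (Y * C * Y)) = w2 by rewrite !mulrA.
  have w12 : w1 = w2.
    apply: cancel2c; by rewrite -{1}f1 -f2 -f3 -(trD Homega) -mulrDr e2 e3 e1.
  have g1 : omega (Y * C * (Y * C)) = w2.
    by rewrite -!mulrA (trC Homega) !mulrA.
  have g2 : omega (Y * C * (C * Y)) = w1.
    by rewrite -!mulrA (trC Homega) !mulrA.
  have g3 : omega (C * Y * (Y * C)) = w1.
    by rewrite mulrA (trC Homega) !mulrA.
  rewrite mulrBl !mulrBr !(trB Homega) g1 g2 g3 -/w2 w12.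
  have g4 : omega (C * Y * (C * Y)) = w2 by rewrite !mulrA.
  by rewrite g4 !subrr.
have step2 : forall Y, starB Y = Y -> C * Y = Y * C.
  move=> Y sY.
  set D := Y * C - C * Y.
  set K := 'i%C *: D.
  have sD : starB D = - D by rewrite /D (star_sub HB) !(starM HB) sY sC opprB.
  have sK : starB K = K.
    by rewrite /K (starZ HB) sD conj_i scaleNr scalerN opprK.
  have KK : K * K = - (D * D).
    by rewrite /K -scalerAl -scalerAr scalerA i_sq scaleN1r.
  have oK : omega (K * K) = 0 by rewrite KK (trN Homega) step1 oppr0.
  have K0 : K * K = 0 := trF Homega (pos_sq HB sK) oK.
  have nK : nrmB K = 0.
    have := nrmC HB K; rewrite sK K0 (nrm0 HB) => /esym /eqP.
    by rewrite expf_eq0 /= => /eqP.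
  have K0' := nrm_eq0 HB nK.
  have D0 : D = 0.
    have : (- 'i%C) *: K = D by rewrite /K scalerA mulNr i_sq opprK scale1r.
    by rewrite K0' scaler0 => <-.
  by apply/eqP; rewrite eq_sym -subr_eq0 -/D D0.
move=> Y.
set Y1 := Y + starB Y.
set Y2 := 'i%C *: (Y - starB Y).
have s1 : starB Y1 = Y1 by rewrite /Y1 (starD HB) (starK HB) addrC.
have s2 : starB Y2 = Y2.
  by rewrite /Y2 (starZ HB) (star_sub HB) (starK HB) conj_i scaleNr -scalerN opprB.
have c1 := step2 _ s1.
have c2 := step2 _ s2.
have eY : Y + Y = Y1 - 'i%C *: Y2.
  rewrite /Y1 /Y2 scalerA i_sq scaleN1r opprK.
  by rewrite addrACA subrr addr0.
apply: cancel2.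
rewrite -mulrDr -mulrDl eY mulrBr mulrBl c1 -scalerAr -scalerAl c2 //.
Qed.
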